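(* Assume vertex labels take values in $\{0,1\}^\ell$. Let $k\ge1$, let $\Omega$ be any collection of functions, let $\varphi\in\mathsf{TL}_k(\Omega)$ with free variables among $x_1,\dots,x_k$, and let $c\in\mathbb R$. Then there is a formula $\tilde\varphi^c$ of $\mathsf C^k_{\infty\omega}$, of quantifier rank at most the summation depth of $\varphi$, such that for every graph $G$ and every $\mathbf v\in V_G^k$: $[\![\varphi]\!]^{\mathbf v}_G=c$ if and only if $\tilde\varphi^c$ is true in $G$ under $x_i\mapsto v_i$. Moreover, if $\varphi\in\mathsf{GTL}_2(\Omega)$ then $\tilde\varphi^c$ can be taken in $\mathsf{GC}_{\infty\omega}$.
   Context: Fix integers $n\ge1$, $\ell\ge1$. A graph is $G=(V_G,E_G,\mathrm{col}_G)$ with $V_G=[n]$, $E_G$ a set of unordered pairs of distinct vertices, and $\mathrm{col}_G:V_G\to\{0,1\}^\ell$. Tensor language: $\Omega$ a collection of functions $f:\mathbb R^p\to\mathbb R$. Expressions $\varphi::=\mathbf 1_{x=y}\mid \mathbf 1_{x\neq y}\mid E(x,y)\mid P_s(x)\mid \varphi\cdot\varphi\mid \varphi+\varphi\mid a\cdot\varphi\mid f(\varphi_1,\dots,\varphi_p)\mid \sum_x\varphi$, usual free variables ($\sum_x$ binds $x$); semantics: $E$ adjacency indicator, $P_s(x)=\mathrm{col}_G(\nu(x))_s$, $\mathbf 1_{x\,\mathrm{op}\,y}$ the (dis)equality indicator, $\cdot,+,a\cdot,f$ pointwise, $[\![\sum_x\varphi]\!]^\nu_G=\sum_{v\in V_G}[\![\varphi]\!]^{\nu[x\mapsto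 v]}_G$. Summation depth: $0$ for atoms, max for $\cdot,+,f(\dots)$, unchanged by $a\cdot$, $+1$ for $\sum_x$. $\mathsf{TL}_k(\Omega)$: expressions using only variables $x_1,\dots,x_k$ (re-binding allowed). Guarded fragment $\mathsf{GTL}_2(\Omega)$: expressions with exactly one free variable ($x_1$ or $x_2$), built from $\mathbf 1_{x_i=x_i}$, $\mathbf 1_{x_i\ne x_i}$, $P_s(x_i)$ by $\cdot$, $+$ of expressions with the same single free variable, $a\cdot$, $f(\varphi_1,\dots,\varphi_p)$ with all $\varphi_j$ sharing the same single free variable, and $\sum_{x_j}(E(x_i,x_j)\cdot\varphi)$ with $\{i,j\}=\{1,2\}$, $\varphi$ with free variable $x_j$. Infinitary counting logic $\mathsf C^k_{\infty\omega}$: formulas over variables $x_1,\dots,x_k$ given by $\varphi::=(x_i=x_j)\mid E(x_i,x_j)\mid P_s(x_i)\mid\neg\varphi\mid\varphi\wedge\varphi\mid\exists^{\ge m}x_i\,\varphi\mid\bigvee_{\alpha\in A}\varphi_\alpha\mid\bigwedge_{\alpha\in A}\varphi_\alpha$ with arbitrary (possibly uncountable) index sets $A$. Truth under a valuation $\mu$: $(x_i=x_j)$ iff $\mu(x_i)=\mu(x_j)$; $E(x_i,x_j)$ iff $\mu(x_i)\mu(x_j)\in E_G$; $P_s(x_i)$ iff $\mathrm{col}_G(\mu(x_i))_s=1$; $\exists^{\ge m}x_i\varphi$ iff at least $m$ vertices $v$ satisfy $\varphi$ under $\mu[x_i\mapsto v]$; infinitary $\bigvee$/$\bigwedge$ as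 some/all. Quantifier rank: nesting depth of counting quantifiers (supremum over infinitary connectives). The guarded fragment $\mathsf{GC}_{\infty\omega}$ (over $x_1,x_2$): equality atoms only of the form $x_i=x_i$; components of $\wedge$, $\bigvee$, $\bigwedge$ have the same single free variable; counting quantifiers only in the forms $\exists^{\ge m}x_2(E(x_1,x_2)\wedge\varphi(x_2))$ or $\exists^{\ge m}x_1(E(x_2,x_1)\wedge\varphi(x_1))$. *)

(* Defs.v *)
From HB Require Import structures.
From mathcomp Require Import all_boot all_order all_algebra.
From Stdlib Require Import Reals.
From mathcomp Require Import Rstruct.

Set Implicit Arguments.
Unset Strict Implicit.
Unset Printing Implicit Defensive.

Import GRing.Theory.
Local Open Scope ring_scope.

Record graph (n l : nat) := Graph {
  adj : rel 'I_n;
  adj_sym : symmetric adj;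
  adj_irr : irreflexive adj;
  col : 'I_n -> 'I_l -> bool
}.

(* valuation update nu[x |-> v]; variables x_1..x_k are 'I_k (0-based) *)
Definition upd {k n : nat} (nu : 'I_k -> 'I_n) (x : 'I_k) (v : 'I_n)
  : 'I_k -> 'I_n := fun j => if j == x then v else nu j.

Inductive tl (l k : nat) : Type :=
| TEq   (x y : 'I_k)
| TNeq  (x y : 'I_k)
| TE    (x y : 'I_k)
| TP    (s : 'I_l) (x : 'I_k)
| TMul  (phi psi : tl l k)
| TAdd  (phi psi : tl l k)
| TScale (a : R) (phi : tl l k)
| TApp  (p : nat) (f : ('I_p -> R) -> R) (args : 'I_p -> tl l k)
| TSum  (x : 'I_k) (phi : tl l k).

Arguments TEq {l k}. Arguments TNeq {l k}. Arguments TE {l k}.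
Arguments TP {l k}. Arguments TMul {l k}. Arguments TAdd {l k}.
Arguments TScale {l k}. Arguments TApp {l k p}. Arguments TSum {l k}.

Definition fcollection := forall p : nat, (('I_p -> R) -> R) -> Prop.

Fixpoint usesOmega {l k} (Om : fcollection) (phi : tl l k) : Prop :=
  match phi with
  | TEq _ _ | TNeq _ _ | TE _ _ | TP _ _ => True
  | TMul a b | TAdd a b => usesOmega Om a /\ usesOmega Om b
  | TScale _ a | TSum _ a => usesOmega Om a
  | TApp p f args => Om p f /\ forall j, usesOmega Om (args j)
  end.

Fixpoint tl_eval {n l k} (G : graph n l) (nu : 'I_k -> 'I_n) (phi : tl l k)
  : R :=
  match phi with
  | TEq x y => if nu x == nu y then 1 else 0
  | TNeq x y => if nu x != nu y then 1 else 0
  | TE x y => if adj G (nu x) (nu y) then 1 else 0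
  | TP s x => if col G (nu x) s then 1 else 0
  | TMul a b => tl_eval G nu a * tl_eval G nu b
  | TAdd a b => tl_eval G nu a + tl_eval G nu b
  | TScale c a => c * tl_eval G nu a
  | TApp p f args => f (fun j => tl_eval G nu (args j))
  | TSum x a => \sum_(v : 'I_n) tl_eval G (upd nu x v) a
  end.

Fixpoint sdepth {l k} (phi : tl l k) : nat :=
  match phi with
  | TEq _ _ | TNeq _ _ | TE _ _ | TP _ _ => 0
  | TMul a b | TAdd a b => maxn (sdepth a) (sdepth b)
  | TScale _ a => sdepth a
  | TApp p f args => \max_(j < p) sdepth (args j)
  | TSum _ a => (sdepth a).+1
  end.

(* Guarded fragment GTL_2: gtl2 i phi  <->  phi \in GTL_2 with the single
   free variable x_i. *)
Inductive gtl2 {l : nat} : 'I_2 -> tl l 2 -> Prop :=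
| G_eq i : gtl2 i (TEq i i)
| G_neq i : gtl2 i (TNeq i i)
| G_P i s : gtl2 i (TP s i)
| G_mul i a b : gtl2 i a -> gtl2 i b -> gtl2 i (TMul a b)
| G_add i a b : gtl2 i a -> gtl2 i b -> gtl2 i (TAdd a b)
| G_scale i c a : gtl2 i a -> gtl2 i (TScale c a)
| G_app i (p : nat) (f : ('I_p -> R) -> R) (args : 'I_p -> tl l 2) : (forall j, gtl2 i (args j)) -> gtl2 i (TApp f args)
| G_sum i j a : i != j -> gtl2 j a -> gtl2 i (TSum j (TMul (TE i j) a)).

Inductive cform (l k : nat) : Type :=
| CEq  (i j : 'I_k)
| CE   (i j : 'I_k)
| CP   (s : 'I_l) (i : 'I_k)
| CNot (phi : cform l k)
| CAnd (phi psi : cform l k)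
| CEx  (m : nat) (i : 'I_k) (phi : cform l k)
| CBigOr  (A : Type) (phis : A -> cform l k)
| CBigAnd (A : Type) (phis : A -> cform l k).

Arguments CEq {l k}. Arguments CE {l k}. Arguments CP {l k}.
Arguments CNot {l k}. Arguments CAnd {l k}. Arguments CEx {l k}.
Arguments CBigOr {l k A}. Arguments CBigAnd {l k A}.

Fixpoint holds {n l k} (G : graph n l) (mu : 'I_k -> 'I_n) (phi : cform l k)
  : Prop :=
  match phi with
  | CEq i j => mu i = mu j
  | CE i j => adj G (mu i) (mu j)
  | CP s i => col G (mu i) s
  | CNot a => ~ holds G mu a
  | CAnd a b => holds G mu a /\ holds G mu b
  | CEx m i a => exists S : {set 'I_n},
      leq m #|S| /\ forall v, v \in S -> holds G (upd mu i v) a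
  | CBigOr A phis => exists x : A, holds G mu (phis x)
  | CBigAnd A phis => forall x : A, holds G mu (phis x)
  end.

(* "quantifier rank of phi is at most d" (the quantifier rank of an
   infinitary connective is the supremum over its components) *)
Fixpoint qrank_le {l k} (phi : cform l k) (d : nat) : Prop :=
  match phi with
  | CEq _ _ | CE _ _ | CP _ _ => True
  | CNot a => qrank_le a d
  | CAnd a b => qrank_le a d /\ qrank_le b d
  | CEx _ _ a => leq 1 d /\ qrank_le a d.-1
  | CBigOr _ phis | CBigAnd _ phis => forall x, qrank_le (phis x) d
  end.

(* Guarded fragment GC_{infty omega}: gc i phi <-> phi is a guarded formula
   with the single free variable x_i. *)
Inductive gc {l : nat} : 'I_2 -> cform l 2 -> Prop :=
| GC_eq i : gc i (CEq i i)
| GC_P i s : gc i (CP s i)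
| GC_not i a : gc i a -> gc i (CNot a)
| GC_and i a b : gc i a -> gc i b -> gc i (CAnd a b)
| GC_or i A (phis : A -> cform l 2) :
    (forall x, gc i (phis x)) -> gc i (CBigOr phis)
| GC_bigand i A (phis : A -> cform l 2) :
    (forall x, gc i (phis x)) -> gc i (CBigAnd phis)
| GC_ex i j m a : i != j -> gc j a -> gc i (CEx m j (CAnd (CE i j) a)).

(* Main.v *)
Require Import Defs.
From HB Require Import structures.
From mathcomp Require Import all_boot all_order all_algebra.
From Stdlib Require Import Reals.
From mathcomp Require Import Rstruct.
From mathcomp Require Import zify.
From Stdlib Require Import FunctionalExtensionality.

Set Implicit Arguments.
Unset Strict Implicit.
Unset Printing Implicit Defensive.
Import GRing.Theory.
Local Open Scope ring_scope.

Section Aux.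
Variables (n l k : nat).

Lemma qrank_mono (phi : cform l k) (d d' : nat) :
  leq d d' -> qrank_le phi d -> qrank_le phi d'.
Proof.
elim: phi d d' => [i j|i j|s i|a IH|a IHa b IHb|m i a IH|A phis IH|A phis IH] d d' h /=.
- by [].
- by [].
- by [].
- exact: IH.
- move=> [h1 h2]; split; [exact: (IHa d)|exact: (IHb d)].
- move=> [h1 h2]; split; first by lia.
  apply: (IH d.-1) => //; lia.
- move=> H x; exact: (IH x d).
- move=> H x; exact: (IH x d).
Qed.

Definition atom (A : cform l k) (c : R) : cform l k :=
  CBigOr (fun b : {b : bool | ((if b then 1 else 0) : R) = c} =>
            if proj1_sig b then A else CNot A).

Definition exactly (m : nat) (x : 'I_k) (psi : cform l k) : cform l k :=
  CAnd (CEx m x psi) (CNot (CEx m.+1 x psi)).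

Lemma atom_ok (G : graph n l) mu (A : cform l k) (bv : bool) c :
  (holds G mu A <-> bv) ->
  (((if bv then 1 else 0) : R) = c <-> holds G mu (atom A c)).
Proof.
move=> hA; split.
- move=> hc; exists (exist _ bv hc) => /=.
  case: bv hA hc => hA hc; first by apply/hA.
  by move=> /hA.
- move=> [[b hb]] /=; case: b hb => hb h.
  + by have := (proj1 hA h) => ->.
  + case: bv hA => hA //; by exfalso; apply: h; apply/hA.
Qed.

Lemma atom_q (A : cform l k) c d : qrank_le A d -> qrank_le (atom A c) d.
Proof. by move=> h [[|] hb]. Qed.

Lemma holds_exactly (G : graph n l) mu m x psi (P : pred 'I_n) :
  (forall v, holds G (upd mu x v) psi <-> P v) ->
  (holds G mu (exactly m x psi) <-> #|[set v | P v]| = m).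
Proof.
move=> hP.
have key : forall m', holds G mu (CEx m' x psi) <-> leq m' #|[set v | P v]|.
  move=> m'; split.
  - move=> [S [hS hv]]; apply: (leq_trans hS); apply: subset_leq_card.
    apply/subsetP => v /hv /hP; by rewrite inE.
  - move=> h; exists [set v | P v]; split => // v; rewrite inE => /hP //.
rewrite /exactly /=; split.
- move=> [/key h1 h2]; have h3 : leq #|[set v | P v]| m.
    by rewrite leqNgt; apply/negP => /key.
  by apply/eqP; rewrite eqn_leq h1 h3.
- move=> h; split; first by apply/key; rewrite h.
  by move=> /key; rewrite h ltnn.
Qed.

End Aux.

Lemma sum_count (n : nat) (h g : 'I_n -> R) :
  (forall r : R, r != 0 -> #|[set v | h v == r]| = #|[set v | g v == r]|) ->
  \sum_v h v = \sum_v g v.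
Proof.
move=> H.
set s := undup ([seq h v | v <- enum 'I_n] ++ [seq g v | v <- enum 'I_n]).
have us : uniq s by apply: undup_uniq.
have claim : forall F : 'I_n -> R, (forall v, F v \in s) ->
   \sum_v F v = \sum_(r <- s) r *+ #|[set v | F v == r]|.
  move=> F hF.
  transitivity (\sum_v \sum_(r <- s) (if F v == r then r else 0)).
    apply: eq_bigr => v _.
    rewrite (bigD1_seq (F v)) //= eqxx big1 ?addr0 // => r.
    by rewrite eq_sym => /negbTE ->.
  rewrite exchange_big; apply: eq_bigr => r _.
  rewrite -big_mkcond /= (eq_bigr (fun=> r)); last by move=> v /eqP.
  by rewrite sumr_const cardsE.
have hs : forall v, h v \in s.
  by move=> v; rewrite mem_undup mem_cat; apply/orP; left; apply/mapP; exists v; rewrite ?mem_enum.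
have gs : forall v, g v \in s.
  by move=> v; rewrite mem_undup mem_cat; apply/orP; right; apply/mapP; exists v; rewrite ?mem_enum.
rewrite (claim h hs) (claim g gs).
apply: eq_bigr => r _.
case: (eqVneq r 0) => [->|hr]; first by rewrite !mul0rn.
by rewrite H.
Qed.

Fixpoint trans (n l k : nat) (phi : tl l k) : R -> cform l k :=
  match phi with
  | TEq x y => atom (CEq x y)
  | TNeq x y => atom (CNot (CEq x y))
  | TE x y => atom (CE x y)
  | TP s x => atom (CP s x)
  | TMul a b => fun c => CBigOr (fun p : {p : R * R | p.1 * p.2 = c} =>
       CAnd (trans n a (proj1_sig p).1) (trans n b (proj1_sig p).2))
  | TAdd a b => fun c => CBigOr (fun p : {p : R * R | p.1 + p.2 = c} =>
       CAnd (trans n a (proj1_sig p).1) (trans n b (proj1_sig p).2))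
  | TScale a0 a => fun c => CBigOr (fun r : {r : R | a0 * r = c} =>
       trans n a (proj1_sig r))
  | TApp p f args => fun c => CBigOr (fun w : {w : 'I_p -> R | f w = c} =>
       CBigAnd (fun j : 'I_p => trans n (args j) (proj1_sig w j)))
  | TSum x a => fun c => CBigOr (fun g : {g : 'I_n -> R | \sum_v g v = c} =>
       CBigAnd (fun r : {r : R | r != 0} =>
         exactly #|[set v | proj1_sig g v == proj1_sig r]| x (trans n a (proj1_sig r))))
  end.

Lemma trans_q n l k (phi : tl l k) c : qrank_le (trans n phi c) (sdepth phi).
Proof.
elim: phi c => [x y|x y|x y|s x|a IHa b IHb|a IHa b IHb|a0 a IH|p f args IH|x a IH] c /=;
  try exact: atom_q.
- move=> [[c1 c2] hc] /=; split; [apply: qrank_mono (IHa _); exact: leq_maxl | apply: qrank_mono (IHb _); exact: leq_maxr].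
- move=> [[c1 c2] hc] /=; split; [apply: qrank_mono (IHa _); exact: leq_maxl | apply: qrank_mono (IHb _); exact: leq_maxr].
- by move=> [r hr] /=.
- move=> [w hw] j /=; apply: qrank_mono (IH _ _); exact: (leq_bigmax j).
- by move=> [g hg] [r hr] /=.
Qed.

Lemma trans_ok n l k (G : graph n l) (phi : tl l k) nu c :
  tl_eval G nu phi = c <-> holds G nu (trans n phi c).
Proof.
elim: phi nu c => [x y|x y|x y|s x|a IHa b IHb|a IHa b IHb|a0 a IH|p f args IH|x a IH] nu c /=.
- apply: atom_ok => /=; split; [by move=> ->|by move/eqP].
- apply: atom_ok => /=; split; [by move=> h; apply/eqP|by move/eqP].
- by apply: atom_ok.
- by apply: atom_ok.
- split.
  + move=> hc; exists (exist _ (tl_eval G nu a, tl_eval G nu b) hc) => /=.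
    by split; [apply/IHa|apply/IHb].
  + by move=> [[[c1 c2] hc] [/IHa h1 /IHb h2]] /=; rewrite h1 h2.
- split.
  + move=> hc; exists (exist _ (tl_eval G nu a, tl_eval G nu b) hc) => /=.
    by split; [apply/IHa|apply/IHb].
  + by move=> [[[c1 c2] hc] [/IHa h1 /IHb h2]] /=; rewrite h1 h2.
- split.
  + move=> hc; exists (exist _ (tl_eval G nu a) hc) => /=; exact/IH.
  + by move=> [[r hr] /IH h] /=; rewrite h.
- split.
  + move=> hc; exists (exist _ (fun j => tl_eval G nu (args j)) hc) => j /=; exact/IH.
  + move=> [[w hw] h] /=; rewrite -hw; congr f; apply: functional_extensionality => j.
    exact/IH/h.
- set h := fun v => tl_eval G (upd nu x v) a.
  have hc : forall (r : R) v, holds G (upd nu x v) (trans n a r) <-> (h v == r).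
    by move=> r v; rewrite -(rwP eqP); split => /IH.
  split.
  + move=> hs; exists (exist _ h hs) => -[r hr].
    exact: (proj2 (holds_exactly _ (hc r)) erefl).
  + move=> [[g hg] H]; rewrite -hg; apply: sum_count => r hr.
    exact: (proj1 (holds_exactly _ (hc r)) (H (exist _ r hr))).
Qed.

Fixpoint gtrans (n l : nat) (phi : tl l 2) : R -> cform l 2 :=
  match phi with
  | TEq x y => atom (CEq x y)
  | TNeq x y => atom (CNot (CEq x y))
  | TE x y => atom (CE x y)
  | TP s x => atom (CP s x)
  | TMul a b => fun c => CBigOr (fun p : {p : R * R | p.1 * p.2 = c} =>
       CAnd (gtrans n a (proj1_sig p).1) (gtrans n b (proj1_sig p).2))
  | TAdd a b => fun c => CBigOr (fun p : {p : R * R | p.1 + p.2 = c} =>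
       CAnd (gtrans n a (proj1_sig p).1) (gtrans n b (proj1_sig p).2))
  | TScale a0 a => fun c => CBigOr (fun r : {r : R | a0 * r = c} =>
       gtrans n a (proj1_sig r))
  | TApp p f args => fun c => CBigOr (fun w : {w : 'I_p -> R | f w = c} =>
       CBigAnd (fun j : 'I_p => gtrans n (args j) (proj1_sig w j)))
  | TSum x (TMul (TE y z) b) => fun c =>
       CBigOr (fun g : {g : 'I_n -> R | \sum_v g v = c} =>
       CBigAnd (fun r : {r : R | r != 0} =>
         exactly #|[set v | proj1_sig g v == proj1_sig r]| x
            (CAnd (CE y z) (gtrans n b (proj1_sig r)))))
  | TSum x _ => fun _ => CEq x x
  end.

Lemma gtrans_gc n l (i : 'I_2) (phi : tl l 2) : gtl2 i phi ->
  forall c, gc i (gtrans n phi c).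
Proof.
elim=> {i phi} /=.
- by move=> i c; apply: GC_or => -[[|] hb] /=; do ! constructor.
- by move=> i c; apply: GC_or => -[[|] hb] /=; do ! constructor.
- by move=> i s c; apply: GC_or => -[[|] hb] /=; do ! constructor.
- by move=> i a b _ IHa _ IHb c; apply: GC_or => -[[c1 c2] hc] /=; constructor.
- by move=> i a b _ IHa _ IHb c; apply: GC_or => -[[c1 c2] hc] /=; constructor.
- by move=> i c0 a _ IH c; apply: GC_or => -[r hr] /=.
- by move=> i p f args _ IH c; apply: GC_or => -[w hw] /=; constructor.
- move=> i j a hij _ IH c; apply: GC_or => -[g hg]; apply: GC_bigand => -[r hr].
  rewrite /exactly; constructor; first by constructor => //; constructor.
  by constructor; constructor => //; constructor.
Qed.

Lemma gtrans_q n l (i : 'I_2) (phi : tl l 2) : gtl2 i phi ->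
  forall c, qrank_le (gtrans n phi c) (sdepth phi).
Proof.
elim=> {i phi} /=.
- by move=> i c; apply: atom_q.
- by move=> i c; apply: atom_q.
- by move=> i s c; apply: atom_q.
- move=> i a b _ IHa _ IHb c [[c1 c2] hc] /=.
  split; [apply: qrank_mono (IHa _); exact: leq_maxl | apply: qrank_mono (IHb _); exact: leq_maxr].
- move=> i a b _ IHa _ IHb c [[c1 c2] hc] /=.
  split; [apply: qrank_mono (IHa _); exact: leq_maxl | apply: qrank_mono (IHb _); exact: leq_maxr].
- by move=> i c0 a _ IH c [r hr] /=.
- move=> i p f args _ IH c [w hw] j /=; apply: qrank_mono (IH _ _); exact: (leq_bigmax j).
- move=> i j a hij _ IH c [g hg] [r hr] /=.
  by rewrite max0n; split; split => //; split.
Qed.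

Lemma gtrans_ok n l (G : graph n l) (i : 'I_2) (phi : tl l 2) : gtl2 i phi ->
  forall nu c, tl_eval G nu phi = c <-> holds G nu (gtrans n phi c).
Proof.
elim=> {i phi}.
- move=> i nu c; apply: atom_ok => /=; by split => // _; apply/eqP.
- move=> i nu c; apply: atom_ok => /=; split; [by move=> h; apply/eqP|by move/eqP].
- by move=> i s nu c; apply: atom_ok.
- move=> i a b _ IHa _ IHb nu c /=; split.
  + move=> hc; exists (exist _ (tl_eval G nu a, tl_eval G nu b) hc) => /=.
    by split; [apply/IHa|apply/IHb].
  + by move=> [[[c1 c2] hc] [/IHa h1 /IHb h2]] /=; rewrite h1 h2.
- move=> i a b _ IHa _ IHb nu c /=; split.
  + move=> hc; exists (exist _ (tl_eval G nu a, tl_eval G nu b) hc) => /=.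
    by split; [apply/IHa|apply/IHb].
  + by move=> [[[c1 c2] hc] [/IHa h1 /IHb h2]] /=; rewrite h1 h2.
- move=> i a0 a _ IH nu c /=; split.
  + move=> hc; exists (exist _ (tl_eval G nu a) hc) => /=; exact/IH.
  + by move=> [[r hr] /IH h] /=; rewrite h.
- move=> i p f args _ IH nu c /=; split.
  + move=> hc; exists (exist _ (fun j => tl_eval G nu (args j)) hc) => j /=; exact/IH.
  + move=> [[w hw] h] /=; rewrite -hw; congr f; apply: functional_extensionality => j.
    exact/IH/h.
- move=> i j a hij _ IH nu c.
  rewrite [tl_eval _ _ _]/=.
  set h := fun v => ((if adj G (upd nu j v i) (upd nu j v j) then 1 else 0) *
     tl_eval G (upd nu j v) a).
  change (\sum_v h v = c <-> holds G nu (gtrans n (TSum j (TMul (TE i j) a)) c)).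
  have ei : forall v, upd nu j v i = nu i by move=> v; rewrite /upd (negbTE hij).
  have ej : forall v, upd nu j v j = v by move=> v; rewrite /upd eqxx.
  have hc : forall (r : R), r != 0 -> forall v,
      holds G (upd nu j v) (CAnd (CE i j) (gtrans n a r)) <-> (h v == r).
    move=> r hr v; rewrite /h /= ?ei ?ej; case: (adj G (nu i) v).
    + rewrite mul1r -(rwP eqP); split; [by move=> [_ /IH]|by move=> /IH].
    + rewrite mul0r; split; [by move=> [] |by rewrite eq_sym (negbTE hr)].
  split.
  + move=> hs; exists (exist _ h hs) => -[r hr].
    exact: (proj2 (holds_exactly _ (hc r hr)) erefl).
  + move=> [[g hg] H]; rewrite -hg; apply: sum_count => r hr.
    exact: (proj1 (holds_exactly _ (hc r hr)) (H (exist _ r hr))).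
Qed.

Theorem mainTheorem14 (n l : nat) (hn : leq 1 n) (hl : leq 1 l) :
  (forall (k : nat) (hk : leq 1 k) (Om : fcollection) (phi : tl l k)
          (hphi : usesOmega Om phi) (c : R),
     exists psi : cform l k,
       qrank_le psi (sdepth phi) /\
       forall (G : graph n l) (v : 'I_k -> 'I_n),
         tl_eval G v phi = c <-> holds G v psi)
  /\
  (forall (Om : fcollection) (i : 'I_2) (phi : tl l 2)
          (hphi : usesOmega Om phi) (hg : gtl2 i phi) (c : R),
     exists psi : cform l 2,
       gc i psi /\ qrank_le psi (sdepth phi) /\
       forall (G : graph n l) (v : 'I_2 -> 'I_n),
         tl_eval G v phi = c <-> holds G v psi).
Proof.
split.
- move=> k _ _ phi _ c; exists (trans n phi c); split; first exact: trans_q.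
  move=> G v; exact: trans_ok.
- move=> _ i phi _ hg c; exists (gtrans n phi c); split; first exact: (gtrans_gc n hg).
  split; first exact: (gtrans_q n hg).
  move=> G v; exact: gtrans_ok hg v c.
Qed.
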